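(* Let the sequences of integers $(a_k)_{k\ge 0}$, $(b_k)$, $(c_k)$, $(d_k)$, $(e_k)$, $(f_k)$, $(p_k)$, $(q_k)$, $(r_k)$, $(s_k)$, $(t_k)$ be defined as the coefficients of the following power series expansions about $x=0$: \begin{align*} &\frac{x^2+164 x+3}{x^3-99 x^2+99 x-1}=\sum_{k=0}^{\infty}a_k x^k, && \frac{-5 x^2+138 x+3}{x^3-99 x^2+99 x-1}=\sum_{k=0}^{\infty}p_k x^k,\\ &\frac{-7 x^2+134 x+1}{x^3-99 x^2+99 x-1}=\sum_{k=0}^{\infty}b_k x^k, && \frac{3 x^2+244 x+1}{x^3-99 x^2+99 x-1}=\sum_{k=0}^{\infty}q_k x^k,\\ &\frac{-x^2+298 x-1}{x^3-99 x^2+99 x-1}=\sum_{k=0}^{\infty}c_k x^k, && \frac{x^2+254 x-7}{x^3-99 x^2+99 x-1}=\sum_{k=0}^{\infty}r_k x^k,\\ &\frac{-5 x^2+228 x-7}{x^3-99 x^2+99 x-1}=\sum_{k=0}^{\infty}d_k x^k, && \frac{-7 x^2+148 x-5}{x^3-99 x^2+99 x-1}=\sum_{k=0}^{\infty}s_k x^k,\\ &\frac{3 x^2+258 x-5}{x^3-99 x^2+99 x-1}=\sum_{k=0}^{\infty}e_k x^k, && \frac{3}{1-x}=\sum_{k=0}^{\infty}t_k x^k,\\ &\frac{-3 x^2+94 x-3}{x^3-99 x^2+99 x-1}=\sum_{k=0}^{\infty}f_k x^k. \end{align*} Then for every integer $j$ with $1\le j\le 5$ and every integer $k\ge 0$,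 \[ a_k^j+b_k^j+c_k^j+d_k^j+e_k^j+f_k^j-p_k^j-q_k^j-r_k^j-s_k^j-t_k^j=1. \]
   Context: The sequences are the Taylor coefficients at $x=0$ of the given rational functions (all denominators are nonzero at $x=0$), equivalently formal power series identities. *)

(* Defs.v *)
From mathcomp Require Import all_boot all_order all_algebra.
Set Implicit Arguments. Unset Strict Implicit. Unset Printing Implicit Defensive.
Import GRing.Theory Num.Theory.
Local Open Scope ring_scope.

(* [is_coeffs_of N D u] : u is the sequence of Taylor coefficients at 0 of the
   rational function N/D (D(0) <> 0), i.e. the formal power series identity
   D(x) * (sum_k u_k x^k) = N(x), coefficientwise:
   for all k, sum_{i=0}^{k} D_i u_{k-i} = N_k. *)
Definition is_coeffs_of (N D : {poly int}) (u : nat -> int) : Prop :=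
  forall k : nat, \sum_(i < k.+1) D`_i * u (k - i)%N = N`_k.

Definition den99 : {poly int} := 'X^3 - 99%:P * 'X^2 + 99%:P * 'X - 1.

(* Main.v *)
Require Import Defs.
From mathcomp Require Import all_boot all_order all_algebra ring.
Import GRing.Theory Num.Theory.
Local Open Scope ring_scope.

Lemma den_coef i : den99`_i = if i == 0%N then -1 else if i == 1%N then 99 else if i == 2%N then -99 else if i == 3%N then 1 else 0.
Proof. rewrite /den99 !coefE; case: i => [|[|[|[|i]]]] //=. Qed.

Lemma coeffs99 N u : is_coeffs_of N den99 u -> (forall k, (3 <= k)%N -> N`_k = 0) ->
 [/\ u 0%N = - N`_0, u 1%N = 99 * u 0%N - N`_1, u 2%N = 99*u 1%N - 99*u 0%N - N`_2 &
   forall k, u (k.+3) = 99*u k.+2 - 99*u k.+1 + u k].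
Proof.
move=> h hN; split.
- have := h 0%N; rewrite big_ord_recl big_ord0 den_coef /= => H; rewrite -H; ring.
- have := h 1%N; rewrite !big_ord_recl big_ord0 !den_coef /= => H; rewrite -H; ring.
- have := h 2%N; rewrite !big_ord_recl big_ord0 !den_coef /= => H; rewrite -H; ring.
- move=> k; have := h k.+3; rewrite hN // !big_ord_recl big1 ?addr0; last first.
    by move=> i _; rewrite den_coef /= mul0r.
  rewrite !den_coef /= !subSS !subn0 => H.
  by rewrite -[u k.+3]addr0 -H; ring.
Qed.

Fixpoint XY (k : nat) : int * int :=
  match k with 0%N => (1, 0) | k'.+1 => let: (x, y) := XY k' in (49*x + 120*y, 20*x + 49*y) end.
Definition X k := (XY k).1.
Definition Y k := (XY k).2.
Lemma XS k : X k.+1 = 49 * X k + 120 * Y k.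
Proof. by rewrite /X /Y /=; case: (XY k). Qed.
Lemma YS k : Y k.+1 = 20 * X k + 49 * Y k.
Proof. by rewrite /X /Y /=; case: (XY k). Qed.
Lemma pell k : X k ^+ 2 - 6 * Y k ^+ 2 = 1.
Proof. elim: k => [|k IH]; first by rewrite /X /Y /=; ring. rewrite XS YS -{}[RHS]IH; ring. Qed.

Definition rec3 (u : nat -> int) := forall k, u k.+3 = 99*u k.+2 - 99*u k.+1 + u k.

Lemma rec3X : rec3 X.
Proof. move=> k; do 4 rewrite ?XS ?YS; ring. Qed.
Lemma rec3Y : rec3 Y.
Proof. move=> k; do 4 rewrite ?XS ?YS; ring. Qed.

Lemma rec3_eq u v : rec3 u -> rec3 v -> u 0%N = v 0%N -> u 1%N = v 1%N -> u 2%N = v 2%N ->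
  forall k, u k = v k.
Proof.
move=> hu hv h0 h1 h2.
suff H : forall k, [/\ u k = v k, u k.+1 = v k.+1 & u k.+2 = v k.+2] by move=> k; case: (H k).
elim=> [|k [e0 e1 e2]]; first by [].
by split=> //; rewrite hu hv e0 e1 e2.
Qed.

Lemma closedR u (A B C : int) : rec3 u -> 12 * u 0%N = A + B -> 12 * u 1%N = A + 49 * B + 20 * C ->
  12 * u 2%N = A + 4801 * B + 1960 * C -> forall k, 12 * u k = A + B * X k + C * Y k.
Proof.
move=> hu h0 h1 h2; apply: rec3_eq.
- by move=> k; rewrite hu; ring.
- by move=> k; rewrite rec3X rec3Y; ring.
- by rewrite h0 /X /Y /=; ring.
- by rewrite h1 /X /Y /=; ring.
- by rewrite h2 /X /Y /=; ring.
Qed.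

Lemma tconst t : is_coeffs_of (3%:P) (1 - 'X) t -> forall k, t k = 3.
Proof.
move=> h; elim=> [|k IH].
  by have := h 0%N; rewrite big_ord_recl big_ord0 !coefE /= => <-; ring.
have := h k.+1; rewrite !big_ord_recl big1 ?addr0; last first.
  by move=> i _; rewrite !coefE /= mul0r.
rewrite !coefE /= => H.
have E : (k.+1 - bump 0 0)%N = k by rewrite /bump /= subSS subn0.
move: H; rewrite E IH subn0 => H; apply/eqP; rewrite -subr_eq0 -H; apply/eqP; ring.
Qed.

Lemma seq_closed N u (A B C : int) : is_coeffs_of N den99 u -> (forall k, (3 <= k)%N -> N`_k = 0) ->
  12 * (- N`_0) = A + B -> 12 * (99 * (- N`_0) - N`_1) = A + 49 * B + 20 * C ->
  12 * (99 * (99 * (- N`_0) - N`_1) - 99 * (- N`_0) - N`_2) = A + 4801 * B + 1960 * C ->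
  forall k, 12 * u k = A + B * X k + C * Y k.
Proof.
move=> h hN e0 e1 e2; have [h0 h1 h2 hr] := coeffs99 _ _ h hN.
apply: closedR => //; by rewrite ?h2 ?h1 h0.
Qed.

Ltac side := first [ by let k := fresh "k" in let hk := fresh "hk" in intros k hk; rewrite !coefE; case: k hk => [|[|[|k]]] | by rewrite !coefE /=; ring ].

Lemma key j (a b c d e f p q r s t x y : int) :
  12 * a = 21 + -57 * x + -138 * y -> 12 * b = 16 + -28 * x + -72 * y -> 12 * c = 37 + -25 * x + -60 * y -> 12 * d = 27 + 57 * x + 138 * y -> 12 * e = 32 + 28 * x + 72 * y -> 12 * f = 11 + 25 * x + 60 * y -> 12 * p = 17 + -53 * x + -132 * y -> 12 * q = 31 + -43 * x + -102 * y -> 12 * r = 31 + 53 * x + 132 * y -> 12 * s = 17 + 43 * x + 102 * y -> t = 3 -> x ^+ 2 - 6 * y ^+ 2 = 1 -> (1 <= j <= 5)%N ->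
  a ^+ j + b ^+ j + c ^+ j + d ^+ j + e ^+ j + f ^+ j
    - p ^+ j - q ^+ j - r ^+ j - s ^+ j - t ^+ j = 1.
Proof.
move=> ha hb hc hd he hf hp hq hr hs ht hxy.
case: j => [|[|[|[|[|[|j]]]]]] // _.
- apply: (@mulfI _ (12 ^+ 1)); first by [].
  rewrite mulr1 (_ : 12 ^+ 1 * (a ^+ 1 + b ^+ 1 + c ^+ 1 + d ^+ 1 + e ^+ 1 + f ^+ 1 - p ^+ 1 - q ^+ 1 - r ^+ 1 - s ^+ 1 - t ^+ 1) = (12 * a) ^+ 1 + (12 * b) ^+ 1 + (12 * c) ^+ 1 + (12 * d) ^+ 1 + (12 * e) ^+ 1 + (12 * f) ^+ 1 - (12 * p) ^+ 1 - (12 * q) ^+ 1 - (12 * r) ^+ 1 - (12 * s) ^+ 1 - (12 * t) ^+ 1); last by ring.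
  rewrite ha hb hc hd he hf hp hq hr hs ht.
  rewrite (_ : (21 + -57 * x + -138 * y) ^+ 1 + (16 + -28 * x + -72 * y) ^+ 1 + (37 + -25 * x + -60 * y) ^+ 1 + (27 + 57 * x + 138 * y) ^+ 1 + (32 + 28 * x + 72 * y) ^+ 1 + (11 + 25 * x + 60 * y) ^+ 1 - (17 + -53 * x + -132 * y) ^+ 1 - (31 + -43 * x + -102 * y) ^+ 1 - (31 + 53 * x + 132 * y) ^+ 1 - (17 + 43 * x + 102 * y) ^+ 1 - (12 * 3) ^+ 1 = 12 ^+ 1 + (x ^+ 2 - 6 * y ^+ 2 - 1) * (0)); last by ring.
  by rewrite hxy subrr mul0r addr0.
- apply: (@mulfI _ (12 ^+ 2)); first by [].
  rewrite mulr1 (_ : 12 ^+ 2 * (a ^+ 2 + b ^+ 2 + c ^+ 2 + d ^+ 2 + e ^+ 2 + f ^+ 2 - p ^+ 2 - q ^+ 2 - r ^+ 2 - s ^+ 2 - t ^+ 2) = (12 * a) ^+ 2 + (12 * b) ^+ 2 + (12 * c) ^+ 2 + (12 * d) ^+ 2 + (12 * e) ^+ 2 + (12 * f) ^+ 2 - (12 * p) ^+ 2 - (12 * q) ^+ 2 - (12 * r) ^+ 2 - (12 * s) ^+ 2 - (12 * t) ^+ 2); last by ring.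
  rewrite ha hb hc hd he hf hp hq hr hs ht.
  rewrite (_ : (21 + -57 * x + -138 * y) ^+ 2 + (16 + -28 * x + -72 * y) ^+ 2 + (37 + -25 * x + -60 * y) ^+ 2 + (27 + 57 * x + 138 * y) ^+ 2 + (32 + 28 * x + 72 * y) ^+ 2 + (11 + 25 * x + 60 * y) ^+ 2 - (17 + -53 * x + -132 * y) ^+ 2 - (31 + -43 * x + -102 * y) ^+ 2 - (31 + 53 * x + 132 * y) ^+ 2 - (17 + 43 * x + 102 * y) ^+ 2 - (12 * 3) ^+ 2 = 12 ^+ 2 + (x ^+ 2 - 6 * y ^+ 2 - 1) * (0)); last by ring.
  by rewrite hxy subrr mul0r addr0.
- apply: (@mulfI _ (12 ^+ 3)); first by [].
  rewrite mulr1 (_ : 12 ^+ 3 * (a ^+ 3 + b ^+ 3 + c ^+ 3 + d ^+ 3 + e ^+ 3 + f ^+ 3 - p ^+ 3 - q ^+ 3 - r ^+ 3 - s ^+ 3 - t ^+ 3) = (12 * a) ^+ 3 + (12 * b) ^+ 3 + (12 * c) ^+ 3 + (12 * d) ^+ 3 + (12 * e) ^+ 3 + (12 * f) ^+ 3 - (12 * p) ^+ 3 - (12 * q) ^+ 3 - (12 * r) ^+ 3 - (12 * s) ^+ 3 - (12 * t) ^+ 3); last by ring.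
  rewrite ha hb hc hd he hf hp hq hr hs ht.
  rewrite (_ : (21 + -57 * x + -138 * y) ^+ 3 + (16 + -28 * x + -72 * y) ^+ 3 + (37 + -25 * x + -60 * y) ^+ 3 + (27 + 57 * x + 138 * y) ^+ 3 + (32 + 28 * x + 72 * y) ^+ 3 + (11 + 25 * x + 60 * y) ^+ 3 - (17 + -53 * x + -132 * y) ^+ 3 - (31 + -43 * x + -102 * y) ^+ 3 - (31 + 53 * x + 132 * y) ^+ 3 - (17 + 43 * x + 102 * y) ^+ 3 - (12 * 3) ^+ 3 = 12 ^+ 3 + (x ^+ 2 - 6 * y ^+ 2 - 1) * (0)); last by ring.
  by rewrite hxy subrr mul0r addr0.
- apply: (@mulfI _ (12 ^+ 4)); first by [].
  rewrite mulr1 (_ : 12 ^+ 4 * (a ^+ 4 + b ^+ 4 + c ^+ 4 + d ^+ 4 + e ^+ 4 + f ^+ 4 - p ^+ 4 - q ^+ 4 - r ^+ 4 - s ^+ 4 - t ^+ 4) = (12 * a) ^+ 4 + (12 * b) ^+ 4 + (12 * c) ^+ 4 + (12 * d) ^+ 4 + (12 * e) ^+ 4 + (12 * f) ^+ 4 - (12 * p) ^+ 4 - (12 * q) ^+ 4 - (12 * r) ^+ 4 - (12 * s) ^+ 4 - (12 * t) ^+ 4); last by ring.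
  rewrite ha hb hc hd he hf hp hq hr hs ht.
  rewrite (_ : (21 + -57 * x + -138 * y) ^+ 4 + (16 + -28 * x + -72 * y) ^+ 4 + (37 + -25 * x + -60 * y) ^+ 4 + (27 + 57 * x + 138 * y) ^+ 4 + (32 + 28 * x + 72 * y) ^+ 4 + (11 + 25 * x + 60 * y) ^+ 4 - (17 + -53 * x + -132 * y) ^+ 4 - (31 + -43 * x + -102 * y) ^+ 4 - (31 + 53 * x + 132 * y) ^+ 4 - (17 + 43 * x + 102 * y) ^+ 4 - (12 * 3) ^+ 4 = 12 ^+ 4 + (x ^+ 2 - 6 * y ^+ 2 - 1) * ((-(14 * 1000 + 400)) + ((812 * 1000 + 160))*y + ((3110 * 1000 + 400))*y*y + ((339 * 1000 + 840))*x + ((2505 * 1000 + 600))*x*y + ((504 * 1000 + 0))*x*x)); last by ring.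
  by rewrite hxy subrr mul0r addr0.
- apply: (@mulfI _ (12 ^+ 5)); first by [].
  rewrite mulr1 (_ : 12 ^+ 5 * (a ^+ 5 + b ^+ 5 + c ^+ 5 + d ^+ 5 + e ^+ 5 + f ^+ 5 - p ^+ 5 - q ^+ 5 - r ^+ 5 - s ^+ 5 - t ^+ 5) = (12 * a) ^+ 5 + (12 * b) ^+ 5 + (12 * c) ^+ 5 + (12 * d) ^+ 5 + (12 * e) ^+ 5 + (12 * f) ^+ 5 - (12 * p) ^+ 5 - (12 * q) ^+ 5 - (12 * r) ^+ 5 - (12 * s) ^+ 5 - (12 * t) ^+ 5); last by ring.
  rewrite ha hb hc hd he hf hp hq hr hs ht.
  rewrite (_ : (21 + -57 * x + -138 * y) ^+ 5 + (16 + -28 * x + -72 * y) ^+ 5 + (37 + -25 * x + -60 * y) ^+ 5 + (27 + 57 * x + 138 * y) ^+ 5 + (32 + 28 * x + 72 * y) ^+ 5 + (11 + 25 * x + 60 * y) ^+ 5 - (17 + -53 * x + -132 * y) ^+ 5 - (31 + -43 * x + -102 * y) ^+ 5 - (31 + 53 * x + 132 * y) ^+ 5 - (17 + 43 * x + 102 * y) ^+ 5 - (12 * 3) ^+ 5 = 12 ^+ 5 + (x ^+ 2 - 6 * y ^+ 2 - 1) * ((-(1728 * 1000 + 0)) + (((97 * 1000 + 459) * 1000 + 200))*y + (((373 * 1000 + 248) * 1000 + 0))*y*y + (((40 * 1000 + 780) * 1000 + 800))*x + (((300 * 1000 + 672) * 1000 + 0))*x*y + (((60 * 1000 + 480) *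 1000 + 0))*x*x)); last by ring.
  by rewrite hxy subrr mul0r addr0.
Qed.

Theorem theorem2p1 (a b c d e f p q r s t : nat -> int) :
  is_coeffs_of ('X^2 + 164%:P * 'X + 3%:P) den99 a ->
  is_coeffs_of (- 7%:P * 'X^2 + 134%:P * 'X + 1) den99 b ->
  is_coeffs_of (- 'X^2 + 298%:P * 'X - 1) den99 c ->
  is_coeffs_of (- 5%:P * 'X^2 + 228%:P * 'X - 7%:P) den99 d ->
  is_coeffs_of (3%:P * 'X^2 + 258%:P * 'X - 5%:P) den99 e ->
  is_coeffs_of (- 3%:P * 'X^2 + 94%:P * 'X - 3%:P) den99 f ->
  is_coeffs_of (- 5%:P * 'X^2 + 138%:P * 'X + 3%:P) den99 p ->
  is_coeffs_of (3%:P * 'X^2 + 244%:P * 'X + 1) den99 q ->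
  is_coeffs_of ('X^2 + 254%:P * 'X - 7%:P) den99 r ->
  is_coeffs_of (- 7%:P * 'X^2 + 148%:P * 'X - 5%:P) den99 s ->
  is_coeffs_of (3%:P) (1 - 'X) t ->
  forall (j k : nat), (1 <= j <= 5)%N ->
    a k ^+ j + b k ^+ j + c k ^+ j + d k ^+ j + e k ^+ j + f k ^+ j
    - p k ^+ j - q k ^+ j - r k ^+ j - s k ^+ j - t k ^+ j = 1.

Proof.
move=> Ha Hb Hc Hd He Hf Hp Hq Hr Hs Ht j k hj.
apply: (key j) hj; last exact: pell.
- by move: k; apply: (seq_closed _ _ _ _ _ Ha); side.
- by move: k; apply: (seq_closed _ _ _ _ _ Hb); side.
- by move: k; apply: (seq_closed _ _ _ _ _ Hc); side.
- by move: k; apply: (seq_closed _ _ _ _ _ Hd); side.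
- by move: k; apply: (seq_closed _ _ _ _ _ He); side.
- by move: k; apply: (seq_closed _ _ _ _ _ Hf); side.
- by move: k; apply: (seq_closed _ _ _ _ _ Hp); side.
- by move: k; apply: (seq_closed _ _ _ _ _ Hq); side.
- by move: k; apply: (seq_closed _ _ _ _ _ Hr); side.
- by move: k; apply: (seq_closed _ _ _ _ _ Hs); side.
- exact: tconst Ht k.
Qed.
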